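(* Let $q$ be a prime power with $q\equiv 1 \pmod 3$, let $\delta\in\mathbb{F}_q$ be a cubic nonresidue, and let $\mathbb{F}_q(\delta^{1/3})$ be the cubic extension of $\mathbb{F}_q$ obtained by adjoining a cube root $\delta^{1/3}$ of $\delta$, with $\mathbb{F}_q$-basis $\{1,\delta^{1/3},\delta^{2/3}\}$. Writing $\alpha=\alpha_1+\alpha_2\delta^{1/3}+\alpha_3\delta^{2/3}$ with $\alpha_i\in\mathbb{F}_q$, define \[\mathbb{H}_q=\left\{(\alpha,\beta)\in \mathbb{F}_q(\delta^{1/3})\times \mathbb{F}_q(\delta^{1/3}) : \alpha_2\beta_3-\alpha_3\beta_2\neq 0\right\}.\] Then the rule \[ \begin{bmatrix} a & b & c\\ d & e & f\\ r & s & t \end{bmatrix} (\alpha,\beta) = \left(\frac{a\alpha+b\beta+c}{r\alpha+s\beta+t}, \frac{d\alpha+e\beta+f}{r\alpha+s\beta+t} \right) \] is well defined for every matrix in $\mathrm{GL}_3(\mathbb{F}_q)$ and every $(\alpha,\beta)\in\mathbb{H}_q$ (i.e. the denominator is nonzero and the image lies in $\mathbb{H}_q$), and it defines a (left) group action of $\mathrm{GL}_3(\mathbb{F}_q)$ on $\mathbb{H}_q$.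
   Context: $\mathrm{GL}_3(\mathbb{F}_q)$ is the group of invertible $3\times 3$ matrices over the finite field $\mathbb{F}_q$. A cubic nonresidue is an element of $\mathbb{F}_q^\times$ that is not a cube in $\mathbb{F}_q$. *)

(* Defs.v *)
From HB Require Import structures.
From mathcomp Require Import all_boot all_order all_algebra all_field.
Set Implicit Arguments. Unset Strict Implicit. Unset Printing Implicit Defensive.
Import GRing.Theory.
Local Open Scope ring_scope.

(* L is a field extension of the finite field F, w a cube root of delta in L,
   and (1, w, w^2) is an F-basis of L, i.e. L = F(delta^{1/3}). *)

Definition cbasis (F : fieldType) (L : fieldExtType F) (w : L) : 3.-tuple L :=
  [tuple 1; w; w ^+ 2].

(* alpha_i = i-th coordinate of alpha in the basis (1, w, w^2),
   so alpha = alpha_1 + alpha_2 w + alpha_3 w^2 ; here indices 0,1,2 *)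
Definition cco (F : fieldType) (L : fieldExtType F) (w : L) (i : 'I_3) (a : L) : F :=
  coord (cbasis w) i a.

Definition inH (F : fieldType) (L : fieldExtType F) (w : L) (x : L * L) : bool :=
  cco w 1 x.1 * cco w 2 x.2 - cco w 2 x.1 * cco w 1 x.2 != 0.

Definition pgl_den (F : fieldType) (L : fieldExtType F) (M : 'M[F]_3) (x : L * L) : L :=
  M 2%R 0%R *: x.1 + M 2%R 1%R *: x.2 + (M 2%R 2%R)%:A.

Definition pgl_act (F : fieldType) (L : fieldExtType F) (M : 'M[F]_3) (x : L * L) : L * L :=
  ((M 0%R 0%R *: x.1 + M 0%R 1%R *: x.2 + (M 0%R 2%R)%:A) / pgl_den M x,
   (M 1%R 0%R *: x.1 + M 1%R 1%R *: x.2 + (M 1%R 2%R)%:A) / pgl_den M x).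

(* Main.v *)
Require Import Defs.
From HB Require Import structures.
From mathcomp Require Import all_boot all_order all_algebra all_field.
From mathcomp Require Import ring.
Import GRing.Theory.
Local Open Scope ring_scope.

Section S.
Variables (F : fieldType) (L : fieldExtType F) (w : L).
Hypothesis hb : basis_of fullv (cbasis w).

Lemma cco_lin i p q r (a b : L) :
  cco w i (p *: a + q *: b + r%:A) = p * cco w i a + q * cco w i b + r * (i == 0 :> 'I_3)%:R.
Proof.
rewrite /cco !linearD !linearZ /=.
have -> : (1 : L) = (cbasis w)`_0 by [].
by rewrite (coord_free (0 : 'I_3)) ?(basis_free hb) // eq_sym.
Qed.

Lemma cco0 i : cco w i 0 = 0.
Proof. by rewrite /cco linear0. Qed.

Lemma cco_eq0 v : (forall i, cco w i v = 0) -> v = 0.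
Proof.
move=> h; rewrite (coord_basis hb (memvf v)).
by apply: big1 => i _; rewrite -/(cco w i v) h scale0r.
Qed.

Lemma ord3P (i : 'I_3) : [\/ i = 0, i = 1 | i = 2].
Proof. by case: i => [[|[|[|k]]] Hi]; [constructor 1|constructor 2|constructor 3|]; try apply/val_inj. Qed.

Definition indep (a b : L) := forall p q r : F, p *: a + q *: b + r%:A = 0 -> [/\ p = 0, q = 0 & r = 0].

Lemma indepP a b : inH w (a, b) <-> indep a b.
Proof.
rewrite /inH /=; split.
  move=> hd p q r e.
  have e0 := congr1 (cco w 0) e; have e1 := congr1 (cco w 1) e; have e2 := congr1 (cco w 2) e.
  rewrite !cco_lin !cco0 /= in e0 e1 e2.
  rewrite ?mulr0 ?addr0 ?mulr1 in e0 e1 e2.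
  set a1 := cco w 1 a in e1 e2 hd *; set a2 := cco w 2 a in e1 e2 hd *.
  set b1 := cco w 1 b in e1 e2 hd *; set b2 := cco w 2 b in e1 e2 hd *.
  have hp : p * (a1 * b2 - a2 * b1) = 0.
    have -> : p * (a1 * b2 - a2 * b1) = b2 * (p * a1 + q * b1) - b1 * (p * a2 + q * b2) by ring.
    by rewrite e1 e2; ring.
  have hq : q * (a1 * b2 - a2 * b1) = 0.
    have -> : q * (a1 * b2 - a2 * b1) = a1 * (p * a2 + q * b2) - a2 * (p * a1 + q * b1) by ring.
    by rewrite e1 e2; ring.
  move/eqP: hp; rewrite mulf_eq0 (negbTE hd) orbF => /eqP hp0.
  move/eqP: hq; rewrite mulf_eq0 (negbTE hd) orbF => /eqP hq0.
  split => //; move: e0; rewrite hp0 hq0 !mul0r !add0r //.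

move=> hi; apply/negP => /eqP hd0.
set a0 := cco w 0 a in hd0 *; set a1 := cco w 1 a in hd0 *; set a2 := cco w 2 a in hd0 *.
set b0 := cco w 0 b in hd0 *; set b1 := cco w 1 b in hd0 *; set b2 := cco w 2 b in hd0 *.
have [h1|h1] := eqVneq (b1, a1) (0, 0).
  have [h2|h2] := eqVneq (b2, a2) (0, 0).
    case: h1 => hb1 ha1; case: h2 => hb2 ha2.
    have [h10 _ _] : [/\ (1:F) = 0, (0:F) = 0 & - a0 = 0].
      apply: hi; apply: cco_eq0 => i; rewrite cco_lin.
      by case: (ord3P i) => ->; rewrite /= -/a0 -/a1 -/a2 ?ha1 ?ha2; ring.
    by move/eqP: h10; rewrite oner_eq0.
  have [hp hq _] : [/\ b2 = 0, - a2 = 0 & - (b2 * a0 - a2 * b0) = 0].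
    apply: hi; apply: cco_eq0 => i; rewrite cco_lin.
    case: (ord3P i) => ->; rewrite /= -/a0 -/a1 -/a2 -/b0 -/b1 -/b2; try ring.
    by rewrite -hd0; ring.
  by move: h2; rewrite hp -[a2]opprK hq oppr0 eqxx.
have [hp hq _] : [/\ b1 = 0, - a1 = 0 & - (b1 * a0 - a1 * b0) = 0].
  apply: hi; apply: cco_eq0 => i; rewrite cco_lin.
  case: (ord3P i) => ->; rewrite /= -/a0 -/a1 -/a2 -/b0 -/b1 -/b2; try ring.
  transitivity (- (a1 * b2 - a2 * b1)); [ring | by rewrite hd0 oppr0].
by move: h1; rewrite hp -[a1]opprK hq oppr0 eqxx.
Qed.

Lemma sc (k : F) (x : L) : k *: x = in_alg L k * x.
Proof. by rewrite /= mulr_algl. Qed.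

Lemma divDD (A B D : L) : D != 0 -> (A / D) / (B / D) = A / B.
Proof. by move=> hD; rewrite invfM invrK mulrACA mulVf // mulr1. Qed.

Lemma uniq_comb (M : 'M[F]_3) p q r : M \in unitmx ->
  (forall j, p * M 0 j + q * M 1 j + r * M 2 j = 0) -> [/\ p = 0, q = 0 & r = 0].
Proof.
move=> hM hj.
pose u : 'rV[F]_3 := \row_i [:: p; q; r]`_i.
have hu : u *m M = 0.
  apply/matrixP => i j; rewrite !mxE !big_ord_recl big_ord0 !mxE /=.
  rewrite -[RHS](hj j) addr0 addrA; congr (_ * M _ j + _ * M _ j + _ * M _ j); exact/val_inj.
have u0 : u = 0.
  by rewrite -[u]mulmx1 -(mulmxV hM) mulmxA hu mul0mx.
have := congr1 (fun m : 'rV[F]_3 => m 0 0) u0.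
have := congr1 (fun m : 'rV[F]_3 => m 0 1) u0.
have := congr1 (fun m : 'rV[F]_3 => m 0 2) u0.
by rewrite !mxE /=.
Qed.

Lemma part1 {M : 'M[F]_3} {x : L * L} : M \in unitmx -> inH w x ->
      pgl_den M x != 0 /\ inH w (pgl_act M x).
Proof.
case: x => a b hM /indepP hi.
have hD : pgl_den M (a, b) != 0.
  apply/eqP => /hi [h0 h1 h2].
  have hc : forall j, 0 * M 0 j + 0 * M 1 j + 1 * M 2 j = 0.
    move=> j; rewrite !mul0r !add0r mul1r.
    by case: (ord3P j) => ->.
  have [_ _ /eqP] := @uniq_comb M 0 0 1 hM hc.
  by rewrite oner_eq0.
split => //; apply/indepP => p q r e.
have e' : (p * M 0 0 + q * M 1 0 + r * M 2 0) *: a + (p * M 0 1 + q * M 1 1 + r * M 2 1) *: b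
   + (p * M 0 2 + q * M 1 2 + r * M 2 2)%:A = 0.
  rewrite -[RHS](mul0r (pgl_den M (a, b))) -e.
  move: hD; rewrite /pgl_act /pgl_den /= => hD.
  rewrite !sc; field; by rewrite -!sc.
have [c0 c1 c2] := hi _ _ _ e'.
apply: uniq_comb hM _ => j; by case: (ord3P j) => ->.
Qed.

Lemma part2 (x : L * L) : pgl_act 1%:M x = x.
Proof.
case: x => a b; rewrite /pgl_act /pgl_den !mxE /=.
rewrite !scale1r !scale0r !add0r !addr0 divr1 divr1 //.
Qed.

Lemma part3 (M N : 'M[F]_3) (x : L * L) : N \in unitmx -> inH w x ->
      pgl_act (M *m N) x = pgl_act M (pgl_act N x).
Proof.
move=> hN hx; have [hD _] := part1 (M := N) hN hx.
case: x hD {hx} => a b; rewrite /pgl_act /pgl_den /=.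
set D := _ + _ + _ => hD.
set n0 := (N 0 0 *: a + _ + _).
set n1 := (N 1 0 *: a + _ + _).
have hn : forall c0 c1 c2 : F, c0 *: (n0 / D) + c1 *: (n1 / D) + c2%:A = (c0 *: n0 + c1 *: n1 + c2 *: D) / D.
  move=> c0 c1 c2; move: hD; rewrite !sc => hD; field; done.
rewrite !hn !divDD //.
rewrite !mxE !big_ord_recl !big_ord0 /D /n0 /n1.
have l1 : lift ord0 ord0 = 1 :> 'I_3 by exact/val_inj.
have l2 : lift ord0 (lift ord0 ord0) = 2 :> 'I_3 by exact/val_inj.
have l0 : ord0 = 0 :> 'I_3 by exact/val_inj.
rewrite l1 l2 l0.
congr (pair (_ / _) (_ / _)); rewrite !sc; ring.
Qed.
End S.

Theorem lemma2p2 (F : finFieldType) (delta : F) (L : fieldExtType F) (w : L) :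
  (#|F| %% 3 = 1)%N ->
  delta != 0 ->
  ~ (exists y : F, y ^+ 3 = delta) ->
  w ^+ 3 = delta%:A ->
  basis_of fullv (cbasis w) ->
  (forall (M : 'M[F]_3) (x : L * L), M \in unitmx -> inH w x ->
      pgl_den M x != 0 /\ inH w (pgl_act M x))
  /\ (forall x : L * L, inH w x -> pgl_act 1%:M x = x)
  /\ (forall (M N : 'M[F]_3) (x : L * L), M \in unitmx -> N \in unitmx -> inH w x ->
      pgl_act (M *m N) x = pgl_act M (pgl_act N x)).
Proof.
move=> _ _ _ _ hb; split; first by move=> M x; exact: (@part1 _ _ _ hb M x).
split; first by move=> x _; exact: (@part2 _ _ x).
by move=> M N x _ hN hx; exact: (@part3 _ _ _ hb M N x hN hx).
Qed.
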